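(* Let $A\in\mathbb{R}^{n\times n}$ be such that $A-I$ is an irreducible singular $M$-matrix, let $v>0$ satisfy $(A^T-I)v=0$, and let $b\in\mathbb{R}^n$ satisfy $v^Tb=0$. Then every solution of $Ax-|x|=b$ is (componentwise) nonnegative, and there is exactly one solution $\hat{x}$ having at least one zero component. Moreover, for every $x^0\in\mathbb{R}^n$ with $D(x^0)\neq I$ (i.e. $x^0$ has at least one nonpositive component), the generalized Newton method $x^{k+1}=(A-D(x^k))^{-1}b$ is well defined for all $k\ge 0$ and $x^k=\hat{x}$ for all $k\ge n+1$.
   Context: For $x\in\mathbb{R}^n$, $|x|$ is the componentwise absolute value, $\mathrm{sign}(x)$ is the vector whose components are $1,0,-1$ according as the corresponding component of $x$ is positive, zero, negative, and $D(x)=\mathrm{diag}(\mathrm{sign}(x))$. A $Z$-matrix is a real square matrix whose off-diagonal entries are all nonpositive; any $Z$-matrix can be written $sI-B$ with $B\ge 0$ entrywise, and it is a singular $M$-matrix if $s=\rho(B)$, where $\rho$ is spectral radius. A square matrix $M$ is reducible if there is a permutation matrix $P$ with $P^TMP=\begin{bmatrix}M_{11}&M_{12}\\0&M_{22}\end{bmatrix}$ where $M_{11},M_{22}$ are square (nonempty) blocks; it is irreducible otherwise. $v>0$ means all components of $v$ are positive. *)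

(* Defs.v *)
From HB Require Import structures.
From mathcomp Require Import all_boot all_order all_algebra all_fingroup.
From mathcomp Require Import complex.
Set Implicit Arguments. Unset Strict Implicit. Unset Printing Implicit Defensive.
Import Order.TTheory GRing.Theory Num.Theory.
Local Open Scope ring_scope.

Section Defs.
Variable R : rcfType.
Variable n : nat.

Definition absv (x : 'cV[R]_n) : 'cV[R]_n := map_mx (fun r => `|r|) x.

Definition Dsgn (x : 'cV[R]_n) : 'M[R]_n := diag_mx (map_mx Num.sg x)^T.

Definition Zmatrix (M : 'M[R]_n) : Prop :=
  forall i j : 'I_n, i != j -> M i j <= 0.

Definition nonneg_mx (B : 'M[R]_n) : Prop := forall i j, 0 <= B i j.

Definition is_spectral_radius (B : 'M[R]_n) (r : R) : Prop :=
  (exists2 l : R[i], eigenvalue (map_mx (fun x => x%:C%C) B) l & `|l| = r%:C%C) /\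
  (forall l : R[i], eigenvalue (map_mx (fun x => x%:C%C) B) l -> `|l| <= r%:C%C).

Definition singular_M_matrix (M : 'M[R]_n) : Prop :=
  Zmatrix M /\
  exists (s : R) (B : 'M[R]_n), nonneg_mx B /\ M = s%:M - B /\ is_spectral_radius B s.

(* reducible: P^T M P = [M11 M12; 0 M22] with square nonempty diagonal blocks *)
Definition reducible (M : 'M[R]_n) : Prop :=
  exists (s : 'S_n) (k : nat), (0 < k < n)%N /\
    forall i j : 'I_n, (k <= i)%N -> (j < k)%N ->
      ((perm_mx s)^T *m M *m perm_mx s) i j = 0.

Definition irreducible (M : 'M[R]_n) : Prop := ~ reducible M.

Fixpoint newton (A : 'M[R]_n) (b x0 : 'cV[R]_n) (k : nat) : 'cV[R]_n :=
  match k with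
  | O => x0
  | S k' => invmx (A - Dsgn (newton A b x0 k')) *m b
  end.

End Defs.

(* Main.v *)
Require Import Defs.
From HB Require Import structures.
From mathcomp Require Import all_boot all_order all_algebra all_fingroup.
From mathcomp Require Import complex.
From mathcomp Require Import ring lra zify.
Import Order.TTheory GRing.Theory Num.Theory.
Local Open Scope ring_scope.


Lemma irr_closed (R : rcfType) n (M : 'M[R]_n) : irreducible M ->
  forall S : {set 'I_n}, (forall i j, i \in S -> j \notin S -> M i j = 0) ->
  S = set0 \/ S = setT.
Proof.
move=> irrM S hS.
case: (eqVneq S set0) => [->|S0]; [by left|].
case: (eqVneq S setT) => [->|ST]; [by right|].
exfalso; apply: irrM.
pose s := enum (~: S) ++ enum S.
have szs : size s = n.
  by rewrite size_cat -!cardE addnC cardsC card_ord.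
have us : uniq s.
  rewrite cat_uniq !enum_uniq /= andbT.
  apply/hasPn => x; rewrite !mem_enum inE => xS; by rewrite negbK.
pose f (i : 'I_n) := nth i s i.
have finj : injective f.
  move=> i j; rewrite /f (set_nth_default i j) ?szs // => /eqP.
  by rewrite nth_uniq ?szs // => /eqP /val_inj.
pose t := perm finj.
have cS : (#|~: S| + #|S| = n)%N by rewrite addnC cardsC card_ord.
have kpos : (0 < #|~: S|)%N.
  rewrite card_gt0; apply: contraNneq ST => e.
  by rewrite -(setCK S) e setC0.
have Spos : (0 < #|S|)%N by rewrite card_gt0.
exists (t^-1)%g, #|~: S|; split.
  apply/andP; split => //; rewrite -[X in (_ < X)%N]cS.
  by rewrite -{1}(addn0 #|~:S|) ltn_add2l.
move=> i j hi hj.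
rewrite tr_perm_mx invgK -row_permE -col_permE !mxE.
apply: hS.
  rewrite permE /f nth_cat -cardE ltnNge hi /=.
  rewrite -mem_enum; apply: mem_nth; rewrite -cardE; have := ltn_ord i.
  by rewrite -[X in (_ < X)%N -> _]cS => h; rewrite ltn_subLR.
rewrite permE /f nth_cat -cardE hj /=.
suff : nth j (enum (~: S)) j \in ~: S by rewrite inE.
by rewrite -mem_enum; apply: mem_nth; rewrite -cardE.
Qed.

Lemma unit_of_inj (F : fieldType) n (K : 'M[F]_n) :
  (forall w : 'cV_n, K *m w = 0 -> w = 0) -> K \in unitmx.
Proof.
move=> h; rewrite -unitmx_tr -row_free_unit -kermx_eq0; apply/eqP/row_matrixP => i.
rewrite row0; apply: trmx_inj; rewrite trmx0; apply: h.
have := mulmx_ker K^T => e.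
have : row i (kermx K^T) *m K^T = 0 by rewrite -row_mul e row0.
by move/(congr1 trmx); rewrite trmx_mul trmxK trmx0.
Qed.

Lemma mono (R : rcfType) n (K : 'M[R]_n) (v : 'cV[R]_n) (c : 'rV[R]_n) :
  (forall i j, i != j -> K i j <= 0) -> (forall i, 0 < v i 0) ->
  v^T *m K = c -> (forall j, 0 <= c 0 j) -> (exists j, 0 < c 0 j) ->
  (forall S : {set 'I_n}, (forall i j, i \in S -> j \notin S -> K i j = 0) ->
     S = set0 \/ S = setT) ->
  forall w : 'cV_n, (forall i, 0 <= (K *m w) i 0) -> forall i, 0 <= w i 0.
Proof.
move=> Koff vpos cK c0 [j0 cj0] clos w Kw.
pose p i : R := ((w i 0 < 0)%R)%:R.
have cE j : c 0 j = \sum_i v i 0 * K i j.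
  by rewrite -cK !mxE; apply: eq_bigr => i _; rewrite mxE.
pose Q := \sum_i p i * v i 0 * (K *m w) i 0.
pose N1 j := - (p j * w j 0 * c 0 j).
pose N2 i j := (p j - p i) * v i 0 * K i j * w j 0.
have QE : Q = \sum_i \sum_j p i * v i 0 * K i j * w j 0.
  apply: eq_bigr => i _; rewrite mxE mulr_sumr; apply: eq_bigr => j _; ring.
have SE : \sum_j p j * w j 0 * c 0 j = \sum_i \sum_j p j * v i 0 * K i j * w j 0.
  rewrite exchange_big; apply: eq_bigr => j _; rewrite cE mulr_sumr.
  apply: eq_bigr => i _; ring.
have eq0 : Q + \sum_j N1 j + \sum_i \sum_j N2 i j = 0.
  have -> : \sum_i \sum_j N2 i j = \sum_j p j * w j 0 * c 0 j - Q.
    rewrite QE SE -sumrB; apply: eq_bigr => i _; rewrite -sumrB.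
    by apply: eq_bigr => j _; rewrite /N2; ring.
  rewrite /N1 sumrN; ring.
have nQ : 0 <= Q.
  apply: sumr_ge0 => i _; rewrite /p; case: (w i 0 < 0)%R => /=.
    by rewrite mul1r mulr_ge0 // ltW.
  by rewrite !mul0r.
have nN1 j : 0 <= N1 j.
  rewrite /N1 /p; case: ltP => /= h; last by rewrite !mul0r oppr0.
  by rewrite mul1r oppr_ge0 mulr_le0_ge0 // ltW.
have nN2 i j : 0 <= N2 i j.
  rewrite /N2 /p; case: (ltP (w j 0)) => hj; case: (ltP (w i 0)) => hi /=;
    rewrite ?subrr ?mul0r //.
  - have ij : i != j by apply: contraTneq hi => ->; rewrite -ltNge.
    rewrite subr0 mul1r -mulrA; apply: mulr_ge0; first exact: ltW.
    by apply: mulr_le0; [exact: Koff | exact: ltW].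
  - have ij : i != j by apply: contraTneq hi => ->; rewrite -leNgt.
    rewrite sub0r mulN1r mulNr mulNr oppr_ge0 -mulrA.
    by apply: mulr_ge0_le0; [exact: ltW | apply: mulr_le0_ge0; [exact: Koff|]].
have g1 : 0 <= \sum_j N1 j by apply: sumr_ge0 => j _.
have g2i i : 0 <= \sum_j N2 i j by apply: sumr_ge0 => j _.
have g2 : 0 <= \sum_i \sum_j N2 i j by apply: sumr_ge0 => i _.
have s1 : \sum_j N1 j = 0.
  move: eq0 g1 g2 nQ; set a := \sum_j N1 j; set b := \sum_i _; lra.
have s2 : \sum_i \sum_j N2 i j = 0.
  move: eq0 g1 g2 nQ; set a := \sum_j N1 j; set b := \sum_i _; lra.
have hN1 j : N1 j = 0 := psumr_eq0P (fun j _ => nN1 j) s1 (isT : predT j).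
have hN2 i j : N2 i j = 0.
  have := psumr_eq0P (fun i _ => g2i i) s2 (isT : predT i).
  by move=> h; apply: (psumr_eq0P (fun j _ => nN2 i j) (h i)).
have hW j : w j 0 < 0 -> c 0 j = 0.
  move=> hj; move: (hN1 j); rewrite /N1 /p hj mul1r => /eqP.
  by rewrite oppr_eq0 mulf_eq0 (lt_eqF hj) /= => /eqP.
have hK i j : 0 <= w i 0 -> w j 0 < 0 -> K i j = 0.
  move=> hi hj; move: (hN2 i j); rewrite /N2 /p hj ltNge hi /= subr0 mul1r => /eqP.
  by rewrite !mulf_eq0 (lt_eqF hj) (gt_eqF (vpos i)) /= orbF => /eqP.
case: (clos [set i | 0 <= w i 0]).
- move=> i j; rewrite !inE -ltNge; exact: hK.
- move=> S0; exfalso.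
  have : w j0 0 < 0.
    rewrite ltNge; apply/negP => h.
    have : j0 \in [set i | 0 <= w i 0] by rewrite inE.
    by rewrite S0 inE.
  by move/hW; move: cj0 => /gt_eqF /eqP.
- move=> ST i; have : i \in [set i | 0 <= w i 0] by rewrite ST inE.
  by rewrite inE.
Qed.

Lemma DsgnE (R : rcfType) n (x : 'cV[R]_n) i j :
  Dsgn x i j = Num.sg (x i 0) *+ (i == j).
Proof. by rewrite /Dsgn !mxE. Qed.

Lemma Dsgn_mulE (R : rcfType) n (x y : 'cV[R]_n) i :
  (Dsgn x *m y) i 0 = Num.sg (x i 0) * y i 0.
Proof. by rewrite /Dsgn mul_diag_mx !mxE. Qed.

Lemma absvE (R : rcfType) n (x : 'cV[R]_n) i : absv x i 0 = `|x i 0|.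
Proof. by rewrite mxE. Qed.

Lemma Dsgn_abs (R : rcfType) n (x : 'cV[R]_n) : Dsgn x *m x = absv x.
Proof. by apply/matrixP => i j; rewrite ord1 Dsgn_mulE absvE normrEsg. Qed.

Lemma subE (R : rcfType) n m (X Y : 'M[R]_(n, m)) i j : (X - Y) i j = X i j - Y i j.
Proof. by rewrite !mxE. Qed.

Lemma addE (R : rcfType) n m (X Y : 'M[R]_(n, m)) i j : (X + Y) i j = X i j + Y i j.
Proof. by rewrite !mxE. Qed.

Lemma scaleE (R : rcfType) n m (c : R) (X : 'M[R]_(n, m)) i j : (c *: X) i j = c * X i j.
Proof. by rewrite !mxE. Qed.

Lemma KwE (R : rcfType) n (A : 'M[R]_n) (x w : 'cV[R]_n) i :
  ((A - Dsgn x) *m w) i 0 = (A *m w) i 0 - Num.sg (x i 0) * w i 0.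
Proof. by rewrite mulmxBl subE Dsgn_mulE. Qed.

Lemma KxE (R : rcfType) n (A : 'M[R]_n) (x w : 'cV[R]_n) :
  (A - Dsgn x) *m w = (A - 1%:M) *m w + (w - Dsgn x *m w).
Proof. by rewrite !mulmxBl mul1mx addrA subrK. Qed.

Lemma sg_le1 (R : rcfType) (r : R) : Num.sg r <= 1.
Proof. by case: (sgrP r) => _; lra. Qed.

Lemma ex_min (R : rcfType) n (f : 'I_n -> R) (i0 : 'I_n) :
  exists i, forall j, f i <= f j.
Proof.
case: (@arg_minP _ R _ i0 predT f isT) => i _ h; exists i => j; exact: h.
Qed.

Theorem theorem4p4 (R : rcfType) (n : nat) (A : 'M[R]_n) (v b : 'cV[R]_n) :
  (0 < n)%N ->
  singular_M_matrix (A - 1%:M) -> irreducible (A - 1%:M) ->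
  (forall i, 0 < v i 0) -> (A^T - 1%:M) *m v = 0 ->
  v^T *m b = 0 ->
  (forall x : 'cV[R]_n, A *m x - absv x = b -> forall i, 0 <= x i 0) /\
  exists xhat : 'cV[R]_n,
    (A *m xhat - absv xhat = b /\ exists i, xhat i 0 = 0) /\
    (forall y : 'cV[R]_n, A *m y - absv y = b -> (exists i, y i 0 = 0) -> y = xhat) /\
    (forall x0 : 'cV[R]_n, Dsgn x0 != 1%:M ->
       (forall k, A - Dsgn (newton A b x0 k) \in unitmx) /\
       (forall k, (n.+1 <= k)%N -> newton A b x0 k = xhat)).
Proof.
move=> n0 [hZ _] hirr vpos hv0 vb.
set M := A - 1%:M.
have hv : v^T *m M = 0.
  have := congr1 trmx hv0; rewrite trmx_mul trmx0.
  by rewrite /M raddfB /= trmx1 trmxK.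
have clos := @irr_closed _ _ _ hirr.
have vb0 : (v^T *m b) 0 0 = 0 by rewrite vb mxE.
have vK x : v^T *m (A - Dsgn x) = \row_j (v j 0 * (1 - Num.sg (x j 0))).
  have -> : A - Dsgn x = M + (1%:M - Dsgn x) by rewrite /M addrA subrK.
  rewrite mulmxDr hv add0r.
  have -> : 1%:M - Dsgn x = diag_mx (\row_j (1 - Num.sg (x j 0))).
    apply/matrixP => i j; rewrite subE DsgnE !mxE.
    by case: (i == j); rewrite ?mulr1n ?mulr0n ?subr0.
  by rewrite mul_mx_diag; apply/matrixP => i j; rewrite !mxE ord1.
have vKw (x w : 'cV[R]_n) : (v^T *m ((A - Dsgn x) *m w)) 0 0 =
    \sum_j v j 0 * (1 - Num.sg (x j 0)) * w j 0.
  by rewrite mulmxA vK mxE; apply: eq_bigr => j _; rewrite mxE.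
have Koff x i j : i != j -> (A - Dsgn x) i j = M i j.
  by move=> ij; rewrite /M !subE DsgnE !mxE (negbTE ij) mulr0n.
have Lmono x : Dsgn x != 1%:M -> forall w : 'cV[R]_n,
    (forall i, 0 <= ((A - Dsgn x) *m w) i 0) -> forall i, 0 <= w i 0.
  move=> Dx; apply: (@mono _ _ (A - Dsgn x) v (\row_j (v j 0 * (1 - Num.sg (x j 0))))).
  - by move=> i j ij; rewrite Koff //; exact: hZ.
  - exact: vpos.
  - exact: vK.
  - move=> j; rewrite mxE; apply: mulr_ge0; [exact: ltW | rewrite subr_ge0; exact: sg_le1].
  - case/boolP: [exists j, Num.sg (x j 0) != 1] => [/existsP [j hj]|].
      exists j; rewrite mxE; apply: mulr_gt0 => //.
      by rewrite subr_gt0 lt_neqAle hj sg_le1.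
    move=> /existsPn h; exfalso; move/eqP: Dx; apply.
    apply/matrixP => i j; rewrite DsgnE mxE; move: (h i); rewrite negbK => /eqP ->.
    done.
  - move=> S hS; apply: clos => i j iS jS.
    have ij : i != j by apply: contraNneq jS => <-.
    by rewrite -(Koff x) // hS.
have Lunit x : Dsgn x != 1%:M -> A - Dsgn x \in unitmx.
  move=> Dx; apply: unit_of_inj => w hw.
  apply/matrixP => i j; rewrite ord1 mxE; apply/eqP; rewrite eq_le.
  have h1 : forall i, 0 <= w i 0 by apply: (Lmono x Dx) => k; rewrite hw mxE.
  have h2 : forall i, 0 <= (- w) i 0.
    by apply: (Lmono x Dx) => k; rewrite mulmxN hw oppr0 mxE.
  move: (h2 i); rewrite mxE oppr_ge0 => ->; by rewrite h1.

have fix_step x (w b' : 'cV[R]_n) : (A - Dsgn x) *m w = b' -> Dsgn x *m w = w -> M *m w = b'.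
  by move=> e1 e2; rewrite -e1 KxE e2 subrr addr0.
have nonneg (x : 'cV[R]_n) : A *m x - absv x = b -> forall i, 0 <= x i 0.
  move=> hx.
  have ex : A *m x - absv x = M *m x - (absv x - x).
    by rewrite /M mulmxBl mul1mx opprB addrA subrK.
  have h : (v^T *m (absv x - x)) 0 0 = 0.
    have : v^T *m (A *m x - absv x) = 0 by rewrite hx.
    rewrite ex mulmxBr mulmxA hv mul0mx sub0r => /eqP; rewrite oppr_eq0 => /eqP ->.
    by rewrite mxE.
  move: h; rewrite mxE => h i.
  have t : forall j, 0 <= v^T 0 j * (absv x - x) j 0.
    move=> j; rewrite !mxE; apply: mulr_ge0; [exact: ltW | rewrite subr_ge0; exact: ler_norm].
  move: (psumr_eq0P (fun j _ => t j) h) => /(_ i isT).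
  rewrite !mxE => /eqP; rewrite mulf_eq0 (gt_eqF (vpos i)) /= subr_eq0 => /eqP <-.
  exact: normr_ge0.
have KL (w : 'cV[R]_n) : (forall i, 0 <= w i 0) -> M *m w = 0 ->
    (exists i, w i 0 = 0) -> w = 0.
  move=> wge Mw [i0 wi0].
  have hS : forall i j, i \in [set k | w k 0 == 0] -> j \notin [set k | w k 0 == 0] ->
      M i j = 0.
    move=> i j; rewrite !inE => /eqP wi wj.
    have e1 : \sum_k (- (M i k * w k 0)) = 0.
      have := congr1 (fun X : 'cV[R]_n => X i 0) Mw; rewrite /= [LHS]mxE [RHS]mxE => e2.
      by rewrite sumrN e2 oppr0.
    have t : forall k, 0 <= - (M i k * w k 0).
      move=> k; case: (eqVneq i k) => [<-|ik]; first by rewrite wi mulr0 oppr0.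
      by rewrite oppr_ge0; apply: mulr_le0_ge0; [exact: hZ|].
    move: (psumr_eq0P (fun k _ => t k) e1) => /(_ j isT) /eqP.
    by rewrite oppr_eq0 mulf_eq0 (negbTE wj) orbF => /eqP.
  case: (clos _ hS) => [S0|ST].
    by have : i0 \in [set k | w k 0 == 0]; [rewrite inE wi0 | rewrite S0 inE].
  apply/matrixP => i j; rewrite ord1 mxE.
  by have : i \in [set k | w k 0 == 0]; [rewrite ST inE | rewrite inE => /eqP].
pose i0 := Ordinal n0.
pose y0 : 'cV[R]_n := \col_i (if i == i0 then 0 else 1).
have sgy0 j : Num.sg (y0 j 0) = (j != i0)%:R.
  by rewrite mxE; case: (j == i0); rewrite ?sgr0 ?sgr1.
have Dy0 : Dsgn y0 != 1%:M.
  apply/eqP => e; have := congr1 (fun X : 'M[R]_n => X i0 i0) e.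
  rewrite /= DsgnE sgy0 !mxE eqxx /= mulr1n => /eqP; by rewrite eq_sym oner_eq0.
have uK0 := Lunit y0 Dy0.
have sum_i0 (f : 'I_n -> R) : (forall j, j != i0 -> f j = 0) -> \sum_j f j = f i0.
  by move=> h; rewrite (bigD1 i0) //= big1 ?addr0 // => j /h.
pose xp := invmx (A - Dsgn y0) *m b.
have Kxp : (A - Dsgn y0) *m xp = b by rewrite mulKVmx.
have Mxp : M *m xp = b.
  have xp0 : xp i0 0 = 0.
    have := vKw y0 xp; rewrite Kxp vb0 (sum_i0 _); last first.
      by move=> j ji; rewrite sgy0 ji subrr mulr0 mul0r.
    rewrite sgy0 eqxx subr0 mulr1 => /esym /eqP.
    by rewrite mulf_eq0 (gt_eqF (vpos i0)) => /eqP.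
  apply: (fix_step y0) => //; apply/matrixP => i j; rewrite ord1 Dsgn_mulE sgy0.
  by case: (eqVneq i i0) => [->|]; rewrite ?xp0 ?mulr0 ?mul1r.
pose e0 : 'cV[R]_n := \col_i (if i == i0 then 1 else 0).
pose u := invmx (A - Dsgn y0) *m e0.
have e0E i : e0 i 0 = (i == i0)%:R by rewrite mxE; case: ifP.
have Ku : (A - Dsgn y0) *m u = e0 by rewrite mulKVmx.
have uge : forall i, 0 <= u i 0.
  apply: (Lmono y0 Dy0) => i; rewrite Ku mxE; by case: ifP.
have ui0 : u i0 0 = 1.
  have := vKw y0 u; rewrite Ku (sum_i0 _); last first.
    by move=> j ji; rewrite sgy0 ji subrr mulr0 mul0r.
  rewrite mxE (sum_i0 _); last by move=> j ji; rewrite !mxE (negbTE ji) mulr0.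
  rewrite sgy0 eqxx subr0 mulr1 !mxE eqxx mulr1 => /esym /eqP.
  rewrite -subr_eq0 -{2}(mulr1 (v i0 0)) -mulrBr mulf_eq0 (gt_eqF (vpos i0)) /=.
  by rewrite subr_eq0 => /eqP.
have Mu : M *m u = 0.
  have Du : Dsgn y0 *m u = u - e0.
    apply/matrixP => i j; rewrite ord1 Dsgn_mulE sgy0 subE e0E.
    case: (eqVneq i i0) => [->|ne]; first by rewrite ?eqxx ui0 /= mulr1n mul0r subrr.
    by rewrite ?ne ?(negbTE ne) /= mulr1n mul1r subr0.
  have : M *m u + (u - (u - e0)) = e0 by rewrite -Du -KxE Ku.
  have -> : u - (u - e0) = e0 by rewrite opprB addrC subrK.
  by move/(congr1 (fun X : 'cV[R]_n => X - e0)); rewrite addrK subrr.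
have upos : forall i, 0 < u i 0.
  move=> i; rewrite lt_neqAle uge andbT; apply/eqP => ui.
  have := KL u uge Mu (ex_intro _ i (esym ui)) => /(congr1 (fun X : 'cV[R]_n => X i0 0)).
  by rewrite ui0 mxE => /eqP; rewrite oner_eq0.
have shift (w : 'cV[R]_n) : exists c, (forall j, 0 <= (w - c *: u) j 0) /\
    exists i, (w - c *: u) i 0 = 0.
  case: (@ex_min _ _ (fun j => w j 0 / u j 0) i0) => i1 h.
  exists (w i1 0 / u i1 0); split.
    move=> j; rewrite subE scaleE subr_ge0 -ler_pdivlMr //; exact: h.
  by exists i1; rewrite subE scaleE divfK ?subrr // gt_eqF.
have KS (w : 'cV[R]_n) : M *m w = 0 -> exists c, w = c *: u.
  move=> Mw; case: (shift w) => c [h1 h2]; exists c.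
  have : w - c *: u = 0.
    by apply: KL => //; rewrite mulmxBr -scalemxAr Mw Mu scaler0 subr0.
  by move/eqP; rewrite subr_eq0 => /eqP.
case: (shift xp) => t [xh0 [istar xhz]].
pose xhat : 'cV[R]_n := xp - t *: u.
have xhge : forall j, 0 <= xhat j 0 := xh0.
have xhz' : xhat istar 0 = 0 := xhz.
have Mxh : M *m xhat = b by rewrite mulmxBr -scalemxAr Mxp Mu scaler0 subr0.
have absxh : absv xhat = xhat.
  by apply/matrixP => i j; rewrite ord1 absvE ger0_norm.
have solxh : A *m xhat - absv xhat = b by rewrite absxh -Mxh /M mulmxBl mul1mx.

split; first exact: nonneg.
exists xhat; split; first by split; [|exists istar].
split.
  move=> y hy [iy yi].
  have yge := nonneg y hy.
  have absy : absv y = y by apply/matrixP => i j; rewrite ord1 absvE ger0_norm.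
  have My : M *m y = b by rewrite -hy absy /M mulmxBl mul1mx.
  case: (KS (y - xhat)); first by rewrite mulmxBr My Mxh subrr.
  move=> c hc.
  have h1 : 0 <= c * u istar 0.
    by rewrite -scaleE -hc subE xhz' subr0.
  have h2 : c * u iy 0 <= 0.
    by rewrite -scaleE -hc subE yi sub0r oppr_le0.
  rewrite pmulr_lge0 // in h1; rewrite pmulr_lle0 // in h2.
  have c0 : c = 0 by apply/eqP; rewrite eq_le h1 h2.
  by move: hc; rewrite c0 scale0r => /eqP; rewrite subr_eq0 => /eqP.
move=> x0 Dx0.
have below (x y : 'cV[R]_n) : Dsgn x != 1%:M -> (A - Dsgn x) *m y = b ->
    forall i, y i 0 <= xhat i 0.
  move=> Dx Ky i.
  suff H : forall i, 0 <= (xhat - y) i 0 by have := H i; rewrite subE subr_ge0.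
  apply: (Lmono x Dx) => k; rewrite mulmxBr Ky KxE Mxh !subE addE subE Dsgn_mulE.
  have := sg_le1 _ (x k 0); have := xhge k.
  move: (Num.sg (x k 0)) (b k 0) (xhat k 0) => s bb X; nra.
have notone (y : 'cV[R]_n) : (forall i, y i 0 <= xhat i 0) -> Dsgn y != 1%:M.
  move=> h; apply/eqP => e; have := congr1 (fun X : 'M[R]_n => X istar istar) e.
  rewrite /= DsgnE eqxx mulr1n mxE eqxx mulr1n => e1.
  have : 0 < y istar 0 by rewrite -sgr_gt0 e1 ltr01.
  have := h istar; rewrite xhz' => a b0; have := lt_le_trans b0 a; by rewrite ltxx.
have mon (x y z : 'cV[R]_n) : Dsgn y != 1%:M -> (A - Dsgn x) *m y = b ->
    (A - Dsgn y) *m z = b -> forall i, y i 0 <= z i 0.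
  move=> Dy Ky Kz i.
  suff H : forall i, 0 <= (z - y) i 0 by have := H i; rewrite subE subr_ge0.
  apply: (Lmono y Dy) => k; rewrite mulmxBr subE Kz -Ky !KwE -normrEsg.
  have := ler_norm (y k 0); have := ler_norm (- y k 0); rewrite normrN.
  case: (sgrP (x k 0)) => _; move: ((A *m y) k 0) (`|y k 0|) (y k 0) => a N Y; lra.
have key (x y : 'cV[R]_n) : Dsgn x != 1%:M -> (A - Dsgn x) *m y = b ->
    (forall i, y i 0 <= xhat i 0) -> (forall i, x i 0 <= xhat i 0) ->
    (forall i, x i 0 <= 0 -> y i 0 <= 0) -> y = xhat.
  move=> Dx Ky yle xle Z.
  have hs := vKw x y; rewrite Ky vb0 in hs.
  have tj j : 0 <= - (v j 0 * (1 - Num.sg (x j 0)) * y j 0).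
    case: (lerP (x j 0) 0) => hx.
      rewrite oppr_ge0; apply: mulr_ge0_le0; last exact: Z.
      by apply: mulr_ge0; [exact: ltW | rewrite subr_ge0 sg_le1].
    by rewrite gtr0_sg // subrr mulr0 mul0r oppr0.
  have hs' : \sum_j - (v j 0 * (1 - Num.sg (x j 0)) * y j 0) = 0.
    by rewrite sumrN -hs oppr0.
  have yz j : x j 0 <= 0 -> y j 0 = 0.
    move=> hx; move: (psumr_eq0P (fun j _ => tj j) hs') => /(_ j isT) /eqP.
    rewrite oppr_eq0 !mulf_eq0 (gt_eqF (vpos j)) /= subr_eq0.
    have -> : (1 == Num.sg (x j 0)) = false.
      by rewrite eq_sym; case: (sgrP (x j 0)) hx => //; lra.
    by move=> /eqP.
  have Dy : Dsgn x *m y = y.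
    apply/matrixP => i j; rewrite ord1 Dsgn_mulE.
    case: (lerP (x i 0) 0) => hx; first by rewrite yz // mulr0.
    by rewrite gtr0_sg // mul1r.
  have My := fix_step x y b Ky Dy.
  case: (KS (y - xhat)); first by rewrite mulmxBr My Mxh subrr.
  move=> c hc.
  have : c * u istar 0 = 0.
    by rewrite -scaleE -hc subE xhz' subr0 yz // (le_trans (xle istar)) // xhz'.
  move/eqP; rewrite mulf_eq0 (gt_eqF (upos istar)) orbF => /eqP c0.
  by move: hc; rewrite c0 scale0r => /eqP; rewrite subr_eq0 => /eqP.
have fixp (x : 'cV[R]_n) : Dsgn x != 1%:M -> x = xhat ->
    invmx (A - Dsgn x) *m b = xhat.
  move=> Dx ex; subst x.
  have Kx : (A - Dsgn xhat) *m xhat = b by rewrite mulmxBl Dsgn_abs.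
  by rewrite -{1}Kx mulKmx // Lunit.
have step k : newton A b x0 k.+1 = invmx (A - Dsgn (newton A b x0 k)) *m b by [].
have Dall : forall k, Dsgn (newton A b x0 k) != 1%:M.
  elim => [//|k IH]; apply: notone; apply: (below (newton A b x0 k)) => //.
  by rewrite step mulKVmx // Lunit.
have Kstep k : (A - Dsgn (newton A b x0 k)) *m newton A b x0 k.+1 = b.
  by rewrite step mulKVmx // Lunit.
have ble k : forall i, newton A b x0 k.+1 i 0 <= xhat i 0.
  exact: (below _ _ (Dall k) (Kstep k)).
split; first by move=> k; exact: Lunit.
pose Z k := [set i | newton A b x0 k i 0 <= 0].
have claim : forall m, newton A b x0 m.+1 = xhat \/ (#|Z m.+1| + m <= n)%N.
  elim => [|m IH].
    by right; rewrite addn0 -[X in (_ <= X)%N](card_ord n) max_card.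
  case: (eqVneq (newton A b x0 m.+2) xhat) => [e|ne]; first by left.
  right; case: IH => [e1|IH].
    by move: ne; rewrite step (fixp _ (Dall m.+1) e1) eqxx.
  have sub : Z m.+2 \subset Z m.+1.
    apply/subsetP => i; rewrite !inE => h.
    exact: le_trans (mon _ _ _ (Dall m.+1) (Kstep m) (Kstep m.+1) i) h.
  have nsub : ~~ (Z m.+1 \subset Z m.+2).
    apply/negP => /subsetP h; move/eqP: ne; apply.
    apply: (key _ _ (Dall m.+1) (Kstep m.+1) (ble m.+1) (ble m)) => i hi.
    by have := h i; rewrite !inE; apply.
  have lt : (#|Z m.+2| < #|Z m.+1|)%N by rewrite (ltn_leqif (subset_leqif_card sub)).
  lia.
have hn1 : newton A b x0 n.+1 = xhat.
  case: (claim n) => // h; exfalso.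
  have h0 : #|Z n.+1| = 0%N by lia.
  have : istar \in Z n.+1 by rewrite inE (le_trans (ble n istar)) // xhz'.
  by rewrite (card0_eq h0).
elim => [//|k IH] hk.
case: (leqP n.+1 k) => hk'.
  by rewrite step; apply: fixp; [exact: Dall | exact: IH].
have -> : k = n by lia.
exact: hn1.
Qed.
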